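(* Let $q=2^h$. In ${\rm PG}(4,q)$ with homogeneous coordinates $(X_1,\dots,X_5)$ let $\pi$ be the plane $X_4=X_5=0$, $\ell$ the line $X_1=X_4=X_5=0$, $\Sigma$ the solid $X_1=0$, $N=(1,0,0,0,0)$, $\mathcal H$ the hyperbolic quadric of $\Sigma$ with equation $X_2X_5+X_3X_4=0$ (and $X_1=0$), $\mathcal C$ the quadratic cone of ${\rm PG}(4,q)$ with equation $X_2X_5+X_3X_4=0$ (vertex $N$, base $\mathcal H$), and let $\mathcal Q_1,\dots,\mathcal Q_{q-1}$ be the $q-1$ parabolic quadrics $X_2X_5+X_3X_4+\lambda X_1^2=0$, $\lambda\in{\rm GF}(q)\setminus\{0\}$. Let $\alpha\in{\rm GF}(q)$ be such that $X^2+X+\alpha$ is irreducible over ${\rm GF}(q)$ and let $G=\{M_{a,b,c,d}: a\in{\rm GF}(q)\setminus\{0\},\ b,c,d\in{\rm GF}(q),\ c^2+cd+\alpha d^2=1\}$, where $$M_{a,b,c,d}=\begin{pmatrix}1&0&0&0&0\\0&ac&\alpha ad&bc&\alpha bd\\0&ad&a(c+d)&bd&b(c+d)\\0&0&0&a^{-1}c&\alpha a^{-1}d\\0&0&0&a^{-1}d&a^{-1}(c+d)\end{pmatrix},$$ acting on points (column vectors) by left multiplication. Then $G$ has exactly $q+5$ orbits on the points of ${\rm PG}(4,q)$: (a) $\{N\}$; (b) an orbit of size $q+1$ consisting of the points of $\ell$; (c) an orbit of size $q^2-1$ consisting of the points of $\pi\setminus(\ell\cup\{N\})$; (d) an orbit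 of size $q^2+q$ consisting of the points of $\mathcal H\setminus\ell$; (e) an orbit of size $q^3-q$ consisting of the points of $\Sigma\setminus\mathcal H$; (f) an orbit of size $q^3-q$ consisting of the points of $\mathcal C\setminus(\pi\cup\mathcal H)$; (g) $q-1$ orbits of size $q^3-q$, namely the sets $\mathcal Q_i\setminus\mathcal H$, $1\le i\le q-1$. *)

(* Defs.v *)
From HB Require Import structures.
From mathcomp Require Import all_boot all_order all_algebra.
Set Implicit Arguments. Unset Strict Implicit. Unset Printing Implicit Defensive.
Import GRing.Theory.
Local Open Scope ring_scope.

Section PG4.
Variable F : finFieldType.

(* Coordinates X_1..X_5 are the entries v 0 0, ..., v 4 0 of a column vector. *)
Definition X (v : 'cV[F]_5) (k : nat) : F := v (inord k) 0.

Definition pt (v : 'cV[F]_5) : {set 'cV[F]_5} := [set k *: v | k in [set k : F | k != 0]].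

Definition PG : {set {set 'cV[F]_5}} := [set pt v | v in [set v : 'cV[F]_5 | v != 0]].

Definition pset (P : 'cV[F]_5 -> bool) : {set {set 'cV[F]_5}} :=
  [set p in PG | [forall v in p, P v]].

Definition Npt : {set 'cV[F]_5} := pt (\col_(i < 5) (i == 0 :> nat)%:R).
Definition ell := pset (fun v => [&& X v 0 == 0, X v 3 == 0 & X v 4 == 0]).
Definition planePi := pset (fun v => (X v 3 == 0) && (X v 4 == 0)).
Definition Sigma := pset (fun v => X v 0 == 0).
Definition Hq := pset (fun v => (X v 0 == 0) && (X v 1 * X v 4 + X v 2 * X v 3 == 0)).
Definition Cone := pset (fun v => X v 1 * X v 4 + X v 2 * X v 3 == 0).
Definition Quad (l : F) :=
  pset (fun v => X v 1 * X v 4 + X v 2 * X v 3 + l * X v 0 ^+ 2 == 0).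

Definition Mabcd (alpha a b c d : F) : 'M[F]_5 :=
  let rows := [:: [:: 1; 0; 0; 0; 0];
                  [:: 0; a * c; alpha * a * d; b * c; alpha * b * d];
                  [:: 0; a * d; a * (c + d); b * d; b * (c + d)];
                  [:: 0; 0; 0; a^-1 * c; alpha * a^-1 * d];
                  [:: 0; 0; 0; a^-1 * d; a^-1 * (c + d)]] in
  \matrix_(i < 5, j < 5) nth 0 (nth [::] rows i) j.

Definition Ggrp (alpha : F) : {set 'M[F]_5} :=
  [set M | [exists a : F, exists b : F, exists c : F, exists d : F,
     [&& a != 0, c ^+ 2 + c * d + alpha * d ^+ 2 == 1 & M == Mabcd alpha a b c d]]].

Definition act (M : 'M[F]_5) (p : {set 'cV[F]_5}) : {set 'cV[F]_5} :=
  [set M *m v | v in p].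

Definition orbitG (alpha : F) (p : {set 'cV[F]_5}) : {set {set 'cV[F]_5}} :=
  [set act M p | M in Ggrp alpha].

Definition orbitsG (alpha : F) : {set {set {set 'cV[F]_5}}} :=
  [set orbitG alpha p | p in PG].

End PG4.

(* Main.v *)
Require Import Defs.
From HB Require Import structures.
From mathcomp Require Import all_boot all_order all_algebra all_field.
From mathcomp Require Import ring zify.
Set Implicit Arguments. Unset Strict Implicit. Unset Printing Implicit Defensive.
Import GRing.Theory.
Local Open Scope ring_scope.

Section Part.
Variable F : finFieldType.

Definition col5 (x1 x2 x3 x4 x5 : F) : 'cV[F]_5 :=
  \col_(i < 5) nth 0 [:: x1; x2; x3; x4; x5] i.

Lemma col5E (v : 'cV[F]_5) : v = col5 (X v 0) (X v 1) (X v 2) (X v 3) (X v 4).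
Proof.
apply/matrixP=> i j; rewrite !mxE (ord1 j).
case: i => [[|[|[|[|[|i]]]]] Hi] //=; rewrite /X; congr (v _ _); apply/val_inj; by rewrite /= inordK.
Qed.

Lemma X_col5 (x1 x2 x3 x4 x5 : F) :
  [/\ X (col5 x1 x2 x3 x4 x5) 0 = x1, X (col5 x1 x2 x3 x4 x5) 1 = x2,
      X (col5 x1 x2 x3 x4 x5) 2 = x3, X (col5 x1 x2 x3 x4 x5) 3 = x4
    & X (col5 x1 x2 x3 x4 x5) 4 = x5].
Proof. by rewrite /X !mxE !inordK. Qed.

Lemma XZ (k : F) (v : 'cV[F]_5) i : X (k *: v) i = k * X v i.
Proof. by rewrite /X mxE. Qed.

Lemma Mabcd_col5 alpha a b c d x1 x2 x3 x4 x5 :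
  Mabcd alpha a b c d *m col5 x1 x2 x3 x4 x5 =
  col5 x1 (a*c*x2 + alpha*a*d*x3 + b*c*x4 + alpha*b*d*x5)
          (a*d*x2 + a*(c+d)*x3 + b*d*x4 + b*(c+d)*x5)
          (a^-1*c*x4 + alpha*a^-1*d*x5) (a^-1*d*x4 + a^-1*(c+d)*x5).
Proof.
apply/matrixP=> i j; rewrite !mxE !big_ord_recl big_ord0 !mxE /=.
case: i => [[|[|[|[|[|i]]]]] Hi] //=; ring.
Qed.

End Part.

Section Alg.
Variable F : finFieldType.
Variable alpha : F.
Hypothesis ch2 : (2%N \in [pchar F]).
Hypothesis hno : forall x : F, x ^+ 2 + x + alpha != 0.

Lemma eq2 (x y z : F) : x = y + 2%:R * z -> x = y.
Proof. by rewrite (pcharf0 ch2) mul0r addr0. Qed.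

Lemma sqrt_ex (x : F) : exists s, s ^+ 2 = x.
Proof.
have inj : injective (fun y : F => y ^+ 2).
  move=> y z /= E.
  have E2 : (y - z) ^+ 2 = y ^+ 2 - z ^+ 2.
    by apply: (@eq2 _ _ (z ^+ 2 - y * z)); ring.
  by apply/eqP; rewrite -subr_eq0 -sqrf_eq0 E2 E subrr.
case: (injF_bij inj) => g _ gK; exists (g x); exact: gK.
Qed.

Definition Nm (c d : F) := c ^+ 2 + c * d + alpha * d ^+ 2.

Lemma Nm_neq0 (c d : F) : (c != 0) || (d != 0) -> Nm c d != 0.
Proof.
have [->|d0] := eqVneq d 0.
  by rewrite orbF /Nm => c0; rewrite mulr0 expr0n /= mulr0 !addr0 sqrf_eq0.
move=> _.
have -> : Nm c d = d ^+ 2 * ((c / d) ^+ 2 + c / d + alpha) by rewrite /Nm; field.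
by rewrite mulf_neq0 ?sqrf_eq0.
Qed.

Lemma F1 (y1 y2 z1 z2 : F) : (y1 != 0) || (y2 != 0) -> (z1 != 0) || (z2 != 0) ->
  exists a c d, [/\ a != 0, Nm c d = 1, a * (c * y1 + alpha * d * y2) = z1
                   & a * (d * y1 + (c + d) * y2) = z2].
Proof.
move=> hy hz.
have hn : y1 ^+ 2 + y1 * y2 - alpha * y2 ^+ 2 != 0.
  have -> : y1 ^+ 2 + y1 * y2 - alpha * y2 ^+ 2 = Nm y1 y2
    by rewrite /Nm -mulNr oppr_pchar2.
  exact: Nm_neq0.
pose e := ((y1 + y2) * z1 - alpha * y2 * z2) / (y1 ^+ 2 + y1 * y2 - alpha * y2 ^+ 2).
pose f := (y1 * z2 - y2 * z1) / (y1 ^+ 2 + y1 * y2 - alpha * y2 ^+ 2).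
have E1 : e * y1 + alpha * f * y2 = z1.
  by rewrite /e /f; field; exact: hn.
have E2 : f * y1 + (e + f) * y2 = z2 by rewrite /e /f; field; exact: hn.
have hef : (e != 0) || (f != 0).
  apply: contraTT hz; rewrite negb_or !negbK => /andP[/eqP e0 /eqP f0].
  by rewrite -E1 -E2 e0 f0 !(mulr0, mul0r, addr0) eqxx.
have [s hs] := sqrt_ex (Nm e f).
have s0 : s != 0 by rewrite -sqrf_eq0 hs; exact: Nm_neq0.
exists s, (e / s), (f / s); split => //.
- have -> : Nm (e / s) (f / s) = Nm e f / s ^+ 2 by rewrite /Nm; field.
  by rewrite -hs divff // sqrf_eq0.
- by rewrite -E1; field.
- by rewrite -E2; field.
Qed.


Lemma par (y1 y2 z1 z2 : F) : (z1 != 0) || (z2 != 0) -> y1 * z2 + y2 * z1 = 0 ->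
  exists beta, y1 = beta * z1 /\ y2 = beta * z2.
Proof.
have [-> /= z20 H|z10 _ H] := eqVneq z1 0.
  rewrite mulr0 addr0 in H.
  exists (y2 / z2); split; last by rewrite divfK.
  by move/eqP: H; rewrite mulf_eq0 (negPf z20) orbF mulr0 => /eqP.
exists (y1 / z1); split; first by rewrite divfK.
have H' : y2 * z1 = y1 * z2.
  by apply/eqP; rewrite -subr_eq0 (GRing.subr_pchar2 ch2) addrC H.
by apply: (mulIf z10); rewrite H' mulrAC divfK.
Qed.

Lemma Rinj (c d x y : F) : Nm c d = 1 -> c * x + alpha * d * y = 0 ->
  d * x + (c + d) * y = 0 -> x = 0 /\ y = 0.
Proof.
move=> hN E1 E2; split.
  have : Nm c d * x = (c + d) * (c * x + alpha * d * y) - alpha * d * (d * x + (c + d) * y)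
           + 2%:R * (alpha * d ^+ 2 * x).
    by rewrite /Nm; ring.
  by rewrite hN mul1r E1 E2 !mulr0 subrr add0r (pcharf0 ch2) mul0r.
have : Nm c d * y = c * (d * x + (c + d) * y) - d * (c * x + alpha * d * y)
         + 2%:R * (alpha * d ^+ 2 * y).
  by rewrite /Nm; ring.
by rewrite hN mul1r E1 E2 !mulr0 subrr add0r (pcharf0 ch2) mul0r.
Qed.

Lemma Rzero (a c d x y : F) : a != 0 -> Nm c d = 1 ->
  ((a * c * x + alpha * a * d * y == 0) && (a * d * x + a * (c + d) * y == 0))
  = ((x == 0) && (y == 0)).
Proof.
move=> a0 hN; apply/idP/idP; last first.
  by case/andP => /eqP -> /eqP ->; rewrite !mulr0 !addr0 eqxx.
case/andP => /eqP E1 /eqP E2.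
have E1' : c * x + alpha * d * y = 0.
  by apply: (mulfI a0); rewrite mulr0 -E1; ring.
have E2' : d * x + (c + d) * y = 0.
  by apply: (mulfI a0); rewrite mulr0 -E2; ring.
by case: (Rinj hN E1' E2') => -> ->; rewrite eqxx.
Qed.

Lemma Qinv (a b c d x2 x3 x4 x5 : F) : a != 0 -> Nm c d = 1 ->
  (a*c*x2 + alpha*a*d*x3 + b*c*x4 + alpha*b*d*x5) * (a^-1*d*x4 + a^-1*(c+d)*x5)
  + (a*d*x2 + a*(c+d)*x3 + b*d*x4 + b*(c+d)*x5) * (a^-1*c*x4 + alpha*a^-1*d*x5)
  = x2 * x5 + x3 * x4.
Proof.
move=> a0 hN.
have -> : (a*c*x2 + alpha*a*d*x3 + b*c*x4 + alpha*b*d*x5) * (a^-1*d*x4 + a^-1*(c+d)*x5)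
  + (a*d*x2 + a*(c+d)*x3 + b*d*x4 + b*(c+d)*x5) * (a^-1*c*x4 + alpha*a^-1*d*x5)
  = Nm c d * (x2 * x5 + x3 * x4) + 2%:R * (c*d*x2*x4 + alpha*d*(c+d)*x3*x5
      + b / a * (c*x4 + alpha*d*x5) * (d*x4 + (c+d)*x5)).
  by rewrite /Nm; field.
by rewrite hN mul1r (pcharf0 ch2) mul0r addr0.
Qed.

Lemma GL (u1 u2 w1 w2 u1' u2' w1' w2' k : F) :
  (w1 != 0) || (w2 != 0) -> (w1' != 0) || (w2' != 0) -> k != 0 ->
  u1 * w2 + u2 * w1 = k ^+ 2 * (u1' * w2' + u2' * w1') ->
  exists a b c d, [/\ a != 0, Nm c d = 1,
    a*c*u1 + alpha*a*d*u2 + b*c*w1 + alpha*b*d*w2 = k * u1'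
    /\ a*d*u1 + a*(c+d)*u2 + b*d*w1 + b*(c+d)*w2 = k * u2' &
    a^-1*c*w1 + alpha*a^-1*d*w2 = k * w1' /\ a^-1*d*w1 + a^-1*(c+d)*w2 = k * w2'].
Proof.
move=> hw hw' k0 HQ.
have hkw : (k * w1' != 0) || (k * w2' != 0).
  by rewrite !mulf_eq0 (negPf k0).
have [a0 [c [d [a00 hN Ew1 Ew2]]]] := F1 hw hkw.
pose s1 := a0^-1 * (c*u1 + alpha*d*u2).
pose s2 := a0^-1 * (d*u1 + (c+d)*u2).
have hy : (k*u1' - s1) * (k*w2') + (k*u2' - s2) * (k*w1') = 0.
  have -> : (k*u1' - s1) * (k*w2') + (k*u2' - s2) * (k*w1')
     = k ^+ 2 * (u1' * w2' + u2' * w1') - (s1 * (k*w2') + s2 * (k*w1')) by ring.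
  rewrite -HQ -Ew1 -Ew2 /s1 /s2.
  have -> : a0^-1 * (c*u1 + alpha*d*u2) * (a0 * (d * w1 + (c + d) * w2))
      + a0^-1 * (d*u1 + (c+d)*u2) * (a0 * (c * w1 + alpha * d * w2))
      = Nm c d * (u1 * w2 + u2 * w1) + 2%:R * (c*d*u1*w1 + alpha*d*(c+d)*u2*w2).
    by rewrite /Nm; field.
  rewrite hN mul1r (pcharf0 ch2) mul0r addr0; ring.
have [beta [Ey1 Ey2]] := par hkw hy.
exists a0^-1, (beta * a0), c, d; split => //.
- by rewrite invr_eq0.
- split.
  + have -> : a0^-1*c*u1 + alpha*a0^-1*d*u2 + beta*a0*c*w1 + alpha*(beta*a0)*d*w2
       = s1 + beta * (a0 * (c*w1 + alpha*d*w2)) by rewrite /s1; ring.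
    by rewrite Ew1 -Ey1; ring.
  + have -> : a0^-1*d*u1 + a0^-1*(c+d)*u2 + beta*a0*d*w1 + beta*a0*(c+d)*w2
       = s2 + beta * (a0 * (d*w1 + (c+d)*w2)) by rewrite /s2; ring.
    by rewrite Ew2 -Ey2; ring.
- rewrite invrK; split.
  + by rewrite -Ew1; ring.
  + by rewrite -Ew2; ring.
Qed.

End Alg.

Section Lab.
Variable F : finFieldType.
Variable alpha : F.
Hypothesis ch2 : (2%N \in [pchar F]).
Hypothesis hno : forall x : F, x ^+ 2 + x + alpha != 0.

Definition labf (x1 x2 x3 x4 x5 : F) : 'I_6 + F :=
  if (x4 == 0) && (x5 == 0) then
    (if x1 == 0 then inl (@Ordinal 6 1 isT)
     else if (x2 == 0) && (x3 == 0) then inl (@Ordinal 6 0 isT) else inl (@Ordinal 6 2 isT))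
  else if x1 == 0 then
    (if x2 * x5 + x3 * x4 == 0 then inl (@Ordinal 6 3 isT) else inl (@Ordinal 6 4 isT))
  else if x2 * x5 + x3 * x4 == 0 then inl (@Ordinal 6 5 isT)
  else inr (- (x2 * x5 + x3 * x4) / x1 ^+ 2).

Variant labf_spec (x1 x2 x3 x4 x5 : F) : 'I_6 + F -> Type :=
| SA of x1 != 0 & x2 = 0 & x3 = 0 & x4 = 0 & x5 = 0 : labf_spec x1 x2 x3 x4 x5 (inl (@Ordinal 6 0 isT))
| SB of x1 = 0 & x4 = 0 & x5 = 0 & (x2 != 0) || (x3 != 0) : labf_spec x1 x2 x3 x4 x5 (inl (@Ordinal 6 1 isT))
| SC of x1 != 0 & x4 = 0 & x5 = 0 & (x2 != 0) || (x3 != 0) : labf_spec x1 x2 x3 x4 x5 (inl (@Ordinal 6 2 isT))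
| SD of x1 = 0 & (x4 != 0) || (x5 != 0) & x2 * x5 + x3 * x4 = 0 : labf_spec x1 x2 x3 x4 x5 (inl (@Ordinal 6 3 isT))
| SE of x1 = 0 & (x4 != 0) || (x5 != 0) & x2 * x5 + x3 * x4 != 0 : labf_spec x1 x2 x3 x4 x5 (inl (@Ordinal 6 4 isT))
| SK of x1 != 0 & (x4 != 0) || (x5 != 0) & x2 * x5 + x3 * x4 = 0 : labf_spec x1 x2 x3 x4 x5 (inl (@Ordinal 6 5 isT))
| SQ of x1 != 0 & (x4 != 0) || (x5 != 0) & x2 * x5 + x3 * x4 != 0 :
    labf_spec x1 x2 x3 x4 x5 (inr (- (x2 * x5 + x3 * x4) / x1 ^+ 2)).

Lemma labfP (x1 x2 x3 x4 x5 : F) :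
  [|| x1 != 0, x2 != 0, x3 != 0, x4 != 0 | x5 != 0] ->
  labf_spec x1 x2 x3 x4 x5 (labf x1 x2 x3 x4 x5).
Proof.
move=> nz; rewrite /labf.
have [/andP[/eqP w4 /eqP w5]|hw] := boolP ((x4 == 0) && (x5 == 0)).
  have [/eqP x10|x10] := boolP (x1 == 0).
    apply: SB => //; move: nz; rewrite x10 w4 w5 eqxx /= !orbF //.
  have [/andP[/eqP u2 /eqP u3]|hu] := boolP ((x2 == 0) && (x3 == 0)).
    exact: SA.
  by apply: SC => //; rewrite -negb_and.
have hw' : (x4 != 0) || (x5 != 0) by rewrite -negb_and.
have [/eqP x10|x10] := boolP (x1 == 0).
  have [/eqP Q0|Q0] := boolP (x2 * x5 + x3 * x4 == 0).
    exact: SD.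
  exact: SE.
have [/eqP Q0|Q0] := boolP (x2 * x5 + x3 * x4 == 0).
  exact: SK.
exact: SQ.
Qed.


Lemma scale_col5 (k x1 x2 x3 x4 x5 : F) :
  k *: col5 x1 x2 x3 x4 x5 = col5 (k * x1) (k * x2) (k * x3) (k * x4) (k * x5).
Proof.
apply/matrixP=> i j; rewrite !mxE.
by case: i => [[|[|[|[|[|i]]]]] Hi].
Qed.

Lemma finM (a b c d k x1 x2 x3 x4 x5 y1 y2 y3 y4 y5 : F) : x1 = k * y1 ->
  a*c*x2 + alpha*a*d*x3 + b*c*x4 + alpha*b*d*x5 = k * y2 ->
  a*d*x2 + a*(c+d)*x3 + b*d*x4 + b*(c+d)*x5 = k * y3 ->
  a^-1*c*x4 + alpha*a^-1*d*x5 = k * y4 ->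
  a^-1*d*x4 + a^-1*(c+d)*x5 = k * y5 ->
  Mabcd alpha a b c d *m col5 x1 x2 x3 x4 x5 = k *: col5 y1 y2 y3 y4 y5.
Proof. by move=> E1 E2 E3 E4 E5; rewrite Mabcd_col5 scale_col5 E1 E2 E3 E4 E5. Qed.

Lemma transf (x1 x2 x3 x4 x5 y1 y2 y3 y4 y5 : F) :
  [|| x1 != 0, x2 != 0, x3 != 0, x4 != 0 | x5 != 0] ->
  [|| y1 != 0, y2 != 0, y3 != 0, y4 != 0 | y5 != 0] ->
  labf x1 x2 x3 x4 x5 = labf y1 y2 y3 y4 y5 ->
  exists a b c d k, [/\ a != 0, Nm alpha c d = 1, k != 0 &
    Mabcd alpha a b c d *m col5 x1 x2 x3 x4 x5 = k *: col5 y1 y2 y3 y4 y5].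
Proof.
move=> nzx nzy.
have N10 : Nm alpha 1 0 = 1 by rewrite /Nm; ring.
case: (labfP nzx); case: (labfP nzy); try (intros; discriminate).
- move=> y10 -> -> -> -> x10 -> -> -> -> _.
  exists 1, 0, 1, 0, (x1 / y1); split => //; first by rewrite oner_eq0.
    by rewrite mulf_neq0 ?invr_eq0.
  by apply: finM; rewrite ?divfK //; ring.
- move=> -> -> -> hy -> -> -> hx _.
  have [a [c [d [a0 hN E1 E2]]]] := F1 ch2 hno hx hy.
  exists a, 0, c, d, 1; split => //; first by rewrite oner_eq0.
  by apply: finM; rewrite ?mulr0 ?mulr1 -?E1 -?E2; ring.
- move=> y10 -> -> hy x10 -> -> hx _.
  have k0 : x1 / y1 != 0 by rewrite mulf_neq0 ?invr_eq0.
  have hky : (x1 / y1 * y2 != 0) || (x1 / y1 * y3 != 0) by rewrite !mulf_eq0 invr_eq0 (negPf x10) (negPf y10).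
  have [a [c [d [a0 hN E1 E2]]]] := F1 ch2 hno hx hky.
  exists a, 0, c, d, (x1 / y1); split => //.
  by apply: finM; rewrite ?mulr0 ?divfK // -?E1 -?E2; ring.
- move=> -> hwy Qy -> hwx Qx _.
  have HQ : x2 * x5 + x3 * x4 = 1 ^+ 2 * (y2 * y5 + y3 * y4) by rewrite Qx Qy; ring.
  have [a [b [c [d [a0 hN [E1 E2] [E3 E4]]]]]] := GL ch2 hno hwx hwy (oner_neq0 F) HQ.
  exists a, b, c, d, 1; split => //; first by rewrite oner_eq0.
  by apply: finM; rewrite ?mulr0.
- move=> -> hwy Qy -> hwx Qx _.
  have [s hs] := sqrt_ex ch2 ((x2 * x5 + x3 * x4) / (y2 * y5 + y3 * y4)).
  have s0 : s != 0 by rewrite -sqrf_eq0 hs mulf_neq0 ?invr_eq0.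
  have HQ : x2 * x5 + x3 * x4 = s ^+ 2 * (y2 * y5 + y3 * y4) by rewrite hs divfK.
  have [a [b [c [d [a0 hN [E1 E2] [E3 E4]]]]]] := GL ch2 hno hwx hwy s0 HQ.
  exists a, b, c, d, s; split => //.
  by apply: finM; rewrite ?mulr0.
- move=> y10 hwy Qy x10 hwx Qx _.
  have k0 : x1 / y1 != 0 by rewrite mulf_neq0 ?invr_eq0.
  have HQ : x2 * x5 + x3 * x4 = (x1 / y1) ^+ 2 * (y2 * y5 + y3 * y4) by rewrite Qx Qy mulr0.
  have [a [b [c [d [a0 hN [E1 E2] [E3 E4]]]]]] := GL ch2 hno hwx hwy k0 HQ.
  exists a, b, c, d, (x1 / y1); split => //.
  by apply: finM; rewrite ?divfK.
- move=> y10 hwy Qy x10 hwx Qx [] H.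
  have k0 : x1 / y1 != 0 by rewrite mulf_neq0 ?invr_eq0.
  have HQ : x2 * x5 + x3 * x4 = (x1 / y1) ^+ 2 * (y2 * y5 + y3 * y4).
    have -> : x2 * x5 + x3 * x4 = - x1 ^+ 2 * (- (x2 * x5 + x3 * x4) / x1 ^+ 2) by field.
    by rewrite H; field.
  have [a [b [c [d [a0 hN [E1 E2] [E3 E4]]]]]] := GL ch2 hno hwx hwy k0 HQ.
  exists a, b, c, d, (x1 / y1); split => //.
  by apply: finM; rewrite ?divfK.
Qed.

Lemma labf_M (a b c d x1 x2 x3 x4 x5 : F) : a != 0 -> Nm alpha c d = 1 ->
  labf x1 (a*c*x2 + alpha*a*d*x3 + b*c*x4 + alpha*b*d*x5)
          (a*d*x2 + a*(c+d)*x3 + b*d*x4 + b*(c+d)*x5)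
          (a^-1*c*x4 + alpha*a^-1*d*x5) (a^-1*d*x4 + a^-1*(c+d)*x5)
  = labf x1 x2 x3 x4 x5.
Proof.
move=> a0 hN; rewrite /labf (Rzero ch2) ?invr_eq0 // (Qinv ch2) //.
case: ifP => // /andP[/eqP -> /eqP ->].
by rewrite !mulr0 !addr0 (Rzero ch2).
Qed.

Lemma labf_scale (k x1 x2 x3 x4 x5 : F) : k != 0 ->
  labf (k * x1) (k * x2) (k * x3) (k * x4) (k * x5) = labf x1 x2 x3 x4 x5.
Proof.
move=> k0.
have QE : k * x2 * (k * x5) + k * x3 * (k * x4) = k ^+ 2 * (x2 * x5 + x3 * x4) by ring.
rewrite /labf !mulf_eq0 (negPf k0) /= QE mulf_eq0 sqrf_eq0 (negPf k0) /=.
have [//|x10] := eqVneq x1 0.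
case: ifP => // _; case: ifP => // _; congr inr; field.
by rewrite x10.
Qed.

Lemma labf_nzM (a b c d x1 x2 x3 x4 x5 : F) : a != 0 -> Nm alpha c d = 1 ->
  [|| x1 != 0, x2 != 0, x3 != 0, x4 != 0 | x5 != 0] ->
  [|| x1 != 0, (a*c*x2 + alpha*a*d*x3 + b*c*x4 + alpha*b*d*x5) != 0,
          (a*d*x2 + a*(c+d)*x3 + b*d*x4 + b*(c+d)*x5) != 0,
          (a^-1*c*x4 + alpha*a^-1*d*x5) != 0 | (a^-1*d*x4 + a^-1*(c+d)*x5) != 0].
Proof.
move=> a0 hN nz.
have [x10|x10] := eqVneq x1 0; last by [].
rewrite x10 eqxx /= in nz *.
apply: contraTT nz; rewrite !negb_or !negbK => /and4P[e1 e2 e3 e4].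
have /andP[/eqP h4 /eqP h5] : (x4 == 0) && (x5 == 0).
  by rewrite -(@Rzero F alpha ch2 a^-1 c d x4 x5) ?invr_eq0 // e3 e4.
move: e1 e2; rewrite h4 h5 !mulr0 !addr0 => e1 e2.
have /andP[/eqP h2 /eqP h3] : (x2 == 0) && (x3 == 0).
  by rewrite -(@Rzero F alpha ch2 a c d x2 x3) // e1 e2.
by rewrite h2 h3 eqxx.
Qed.

End Lab.

Section Pts.
Variable F : finFieldType.
Variable alpha : F.
Hypothesis ch2 : (2%N \in [pchar F]).
Hypothesis hno : forall x : F, x ^+ 2 + x + alpha != 0.

Lemma Xc0 (x1 x2 x3 x4 x5 : F) : X (col5 x1 x2 x3 x4 x5) 0 = x1.
Proof. by case: (X_col5 x1 x2 x3 x4 x5). Qed.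
Lemma Xc1 (x1 x2 x3 x4 x5 : F) : X (col5 x1 x2 x3 x4 x5) 1 = x2.
Proof. by case: (X_col5 x1 x2 x3 x4 x5). Qed.
Lemma Xc2 (x1 x2 x3 x4 x5 : F) : X (col5 x1 x2 x3 x4 x5) 2 = x3.
Proof. by case: (X_col5 x1 x2 x3 x4 x5). Qed.
Lemma Xc3 (x1 x2 x3 x4 x5 : F) : X (col5 x1 x2 x3 x4 x5) 3 = x4.
Proof. by case: (X_col5 x1 x2 x3 x4 x5). Qed.
Lemma Xc4 (x1 x2 x3 x4 x5 : F) : X (col5 x1 x2 x3 x4 x5) 4 = x5.
Proof. by case: (X_col5 x1 x2 x3 x4 x5). Qed.
Definition Xc := (Xc0, Xc1, Xc2, Xc3, Xc4).

Definition lab (v : 'cV[F]_5) := labf (X v 0) (X v 1) (X v 2) (X v 3) (X v 4).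

Lemma col50 : col5 0 0 0 0 0 = 0 :> 'cV[F]_5.
Proof. by apply/matrixP => i j; rewrite !mxE; case: i => [[|[|[|[|[|i]]]]] Hi]. Qed.

Lemma nzP (v : 'cV[F]_5) :
  (v != 0) = [|| X v 0 != 0, X v 1 != 0, X v 2 != 0, X v 3 != 0 | X v 4 != 0].
Proof.
apply/idP/idP; apply: contraTT; rewrite !negb_or !negbK.
  case/and5P => /eqP e0 /eqP e1 /eqP e2 /eqP e3 /eqP e4.
  by rewrite (col5E v) e0 e1 e2 e3 e4 col50.
by move/eqP => ->; rewrite /X !mxE eqxx.
Qed.

Lemma lab_scale (k : F) (v : 'cV[F]_5) : k != 0 -> lab (k *: v) = lab v.
Proof. by move=> k0; rewrite /lab !XZ labf_scale. Qed.

Lemma Mv a b c d (v : 'cV[F]_5) : Mabcd alpha a b c d *m v =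
  col5 (X v 0) (a*c*X v 1 + alpha*a*d*X v 2 + b*c*X v 3 + alpha*b*d*X v 4)
          (a*d*X v 1 + a*(c+d)*X v 2 + b*d*X v 3 + b*(c+d)*X v 4)
          (a^-1*c*X v 3 + alpha*a^-1*d*X v 4) (a^-1*d*X v 3 + a^-1*(c+d)*X v 4).
Proof. by rewrite {1}(col5E v) Mabcd_col5. Qed.

Lemma lab_M a b c d (v : 'cV[F]_5) : a != 0 -> Nm alpha c d = 1 ->
  lab (Mabcd alpha a b c d *m v) = lab v.
Proof. by move=> a0 hN; rewrite /lab Mv !Xc labf_M. Qed.

Lemma nz_M a b c d (v : 'cV[F]_5) : a != 0 -> Nm alpha c d = 1 -> v != 0 ->
  Mabcd alpha a b c d *m v != 0.
Proof. by move=> a0 hN; rewrite !nzP Mv !Xc; apply: labf_nzM. Qed.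

Lemma mem_ptP (x v : 'cV[F]_5) : reflect (exists2 k : F, k != 0 & x = k *: v) (x \in pt v).
Proof.
apply: (iffP imsetP) => [[k]|[k]]; rewrite ?inE => k0 ->; exists k => //.
by rewrite inE.
Qed.

Lemma pt_self (v : 'cV[F]_5) : v \in pt v.
Proof. by apply/mem_ptP; exists 1; rewrite ?oner_eq0 ?scale1r. Qed.

Lemma act_pt (M : 'M[F]_5) (v : 'cV[F]_5) : act M (pt v) = pt (M *m v).
Proof.
rewrite /act /pt -imset_comp; apply: eq_imset => k /=.
by rewrite scalemxAr.
Qed.

Lemma pt_scale (k : F) (v : 'cV[F]_5) : k != 0 -> pt (k *: v) = pt v.
Proof.
move=> k0; apply/setP => x; apply/mem_ptP/mem_ptP => [[k' k'0 ->]|[k' k'0 ->]].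
  by exists (k' * k); rewrite ?mulf_neq0 // scalerA.
exists (k' / k); first by rewrite mulf_neq0 ?invr_eq0.
by rewrite scalerA divfK.
Qed.

Lemma pt_eqE (v v' : 'cV[F]_5) : pt v = pt v' -> exists2 k : F, k != 0 & v = k *: v'.
Proof. by move=> E; apply/mem_ptP; rewrite -E pt_self. Qed.

Lemma PGP p : reflect (exists2 v, v != 0 & p = pt v) (p \in PG F).
Proof.
apply: (iffP imsetP) => [[v]|[v]]; rewrite ?inE => v0 ->; exists v => //.
by rewrite inE.
Qed.

Lemma pt_PG (v : 'cV[F]_5) : v != 0 -> pt v \in PG F.
Proof. by move=> v0; apply/PGP; exists v. Qed.

Definition scinv (P : 'cV[F]_5 -> bool) := forall k x, k != 0 -> P (k *: x) = P x.

Lemma forall_pt P (v : 'cV[F]_5) : scinv P -> [forall x in pt v, P x] = P v.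
Proof.
move=> hP; apply/forall_inP/idP => [H|Pv x /mem_ptP[k k0 ->]].
  exact: H (pt_self v).
by rewrite hP.
Qed.

Lemma mem_pset P (v : 'cV[F]_5) : scinv P -> v != 0 -> (pt v \in pset P) = P v.
Proof. by move=> hP v0; rewrite inE pt_PG //= forall_pt. Qed.

Lemma pset_sub P : pset P \subset PG F.
Proof. by apply/subsetP => p; rewrite inE => /andP[]. Qed.

Lemma eq_onPG (S S' : {set {set 'cV[F]_5}}) : S \subset PG F -> S' \subset PG F ->
  (forall v, v != 0 -> (pt v \in S) = (pt v \in S')) -> S = S'.
Proof.
move=> sS sS' H; apply/setP => p.
have [pPG|npPG] := boolP (p \in PG F).
  by case/PGP: pPG => v v0 ->; apply: H.
apply/idP/idP => hp; case/negP: npPG.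
  exact: (subsetP sS).
exact: (subsetP sS').
Qed.

Lemma scinv_lab L : scinv (fun x => lab x == L).
Proof. by move=> k x k0; rewrite lab_scale. Qed.

Lemma orbit_cls (v : 'cV[F]_5) : v != 0 ->
  orbitG alpha (pt v) = pset (fun x => lab x == lab v).
Proof.
move=> v0; apply/setP => p; apply/imsetP/idP.
  case=> M; rewrite inE => /existsP[a /existsP[b /existsP[c /existsP[d]]]].
  case/and3P => a0 /eqP hN /eqP -> ->.
  rewrite act_pt mem_pset; last exact: nz_M.
    by rewrite (lab_M _ _ a0 hN).
  exact: scinv_lab.
move=> hp; have := subsetP (pset_sub _) _ hp; case/PGP => v' v'0 pE.
move: hp; rewrite pE mem_pset //; last exact: scinv_lab.
move/eqP => E.
have nzv := v0; have nzv' := v'0; rewrite nzP in nzv; rewrite nzP in nzv'.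
have [a [b [c [d [k [a0 hN k0 HM]]]]]] := transf ch2 hno nzv nzv' (esym E).
rewrite -!col5E in HM.
exists (Mabcd alpha a b c d).
  rewrite inE; apply/existsP; exists a; apply/existsP; exists b.
  apply/existsP; exists c; apply/existsP; exists d.
  by rewrite a0 /=; apply/andP; split; [apply/eqP; exact: hN|].
by rewrite act_pt HM pt_scale.
Qed.

End Pts.

Section Cls.
Variable F : finFieldType.
Variable alpha : F.
Hypothesis ch2 : (2%N \in [pchar F]).
Hypothesis hno : forall x : F, x ^+ 2 + x + alpha != 0.

Definition L0 : 'I_6 + F := inl (@Ordinal 6 0 isT).
Definition L1 : 'I_6 + F := inl (@Ordinal 6 1 isT).
Definition L2 : 'I_6 + F := inl (@Ordinal 6 2 isT).
Definition L3 : 'I_6 + F := inl (@Ordinal 6 3 isT).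
Definition L4 : 'I_6 + F := inl (@Ordinal 6 4 isT).
Definition L5 : 'I_6 + F := inl (@Ordinal 6 5 isT).

Definition cls (L : 'I_6 + F) := pset (fun x => lab x == L).

Lemma nz_pt (v x : 'cV[F]_5) : v != 0 -> x \in pt v -> x != 0.
Proof. by move=> v0 /mem_ptP[k k0 ->]; rewrite scaler_eq0 negb_or k0. Qed.

Lemma mem_pset' (P Q : 'cV[F]_5 -> bool) v : (forall x, x != 0 -> P x = Q x) ->
  scinv Q -> v != 0 -> (pt v \in pset P) = Q v.
Proof.
move=> PQ hQ v0; rewrite inE pt_PG //= -(forall_pt v hQ).
apply: eq_forallb => x; case xp: (x \in pt v) => //=.
exact: PQ (nz_pt v0 xp).
Qed.

Lemma Npt_col : Npt F = pt (col5 1 0 0 0 0).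
Proof.
rewrite /Npt; congr pt; apply/matrixP => i j; rewrite !mxE.
by case: i => [[|[|[|[|[|i]]]]] Hi].
Qed.

Lemma ptN (v : 'cV[F]_5) : v != 0 -> (pt v \in [set Npt F]) = (lab v == L0).
Proof.
move=> v0; rewrite in_set1 Npt_col; apply/eqP/eqP.
  case/pt_eqE => k k0 ->; rewrite lab_scale // /lab !Xc /labf eqxx oner_eq0 /=.
  by [].
move: v0; rewrite nzP /lab => nz; case: (labfP nz) => //.
move=> h1 e2 e3 e4 e5 _; rewrite (col5E v) e2 e3 e4 e5.
have -> : col5 (X v 0%N) 0 0 0 0 = X v 0%N *: col5 1 0 0 0 0.
  by rewrite scale_col5 mulr1 mulr0.
by rewrite pt_scale.
Qed.

Lemma ellP (v : 'cV[F]_5) :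
  [&& X v 0%N == 0, X v 3%N == 0 & X v 4%N == 0] = (lab v == L1).
Proof.
rewrite /lab /labf.
case: (boolP ((X v 3%N == 0) && (X v 4%N == 0))) => [/andP[/eqP E3 /eqP E4]|_].
  rewrite ?E3 ?E4 ?eqxx ?mulr0 ?addr0 ?eqxx /=.
  by case: (X v 0%N == 0); case: ((X v 1%N == 0) && (X v 2%N == 0)).
rewrite /=.
by case: (X v 0%N == 0); case: (X v 1%N * X v 4%N + X v 2%N * X v 3%N == 0).
Qed.

Lemma piP (v : 'cV[F]_5) :
  (X v 3%N == 0) && (X v 4%N == 0) = (lab v \in [:: L0; L1; L2]).
Proof.
rewrite /lab /labf.
case: (boolP ((X v 3%N == 0) && (X v 4%N == 0))) => [/andP[/eqP E3 /eqP E4]|_].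
  rewrite ?E3 ?E4 ?eqxx ?mulr0 ?addr0 ?eqxx /=.
  by case: (X v 0%N == 0); case: ((X v 1%N == 0) && (X v 2%N == 0)).
rewrite /=.
by case: (X v 0%N == 0); case: (X v 1%N * X v 4%N + X v 2%N * X v 3%N == 0).
Qed.

Lemma sigP (v : 'cV[F]_5) :
  (X v 0%N == 0) = (lab v \in [:: L1; L3; L4]).
Proof.
rewrite /lab /labf.
case: (boolP ((X v 3%N == 0) && (X v 4%N == 0))) => [/andP[/eqP E3 /eqP E4]|_].
  rewrite ?E3 ?E4 ?eqxx ?mulr0 ?addr0 ?eqxx /=.
  by case: (X v 0%N == 0); case: ((X v 1%N == 0) && (X v 2%N == 0)).
rewrite /=.
by case: (X v 0%N == 0); case: (X v 1%N * X v 4%N + X v 2%N * X v 3%N == 0).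
Qed.

Lemma hqP (v : 'cV[F]_5) :
  (X v 0%N == 0) && (X v 1%N * X v 4%N + X v 2%N * X v 3%N == 0) = (lab v \in [:: L1; L3]).
Proof.
rewrite /lab /labf.
case: (boolP ((X v 3%N == 0) && (X v 4%N == 0))) => [/andP[/eqP E3 /eqP E4]|_].
  rewrite ?E3 ?E4 ?eqxx ?mulr0 ?addr0 ?eqxx /=.
  by case: (X v 0%N == 0); case: ((X v 1%N == 0) && (X v 2%N == 0)).
rewrite /=.
by case: (X v 0%N == 0); case: (X v 1%N * X v 4%N + X v 2%N * X v 3%N == 0).
Qed.

Lemma coneP (v : 'cV[F]_5) :
  (X v 1%N * X v 4%N + X v 2%N * X v 3%N == 0) = (lab v \in [:: L0; L1; L2; L3; L5]).
Proof.
rewrite /lab /labf.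
case: (boolP ((X v 3%N == 0) && (X v 4%N == 0))) => [/andP[/eqP E3 /eqP E4]|_].
  rewrite ?E3 ?E4 ?eqxx ?mulr0 ?addr0 ?eqxx /=.
  by case: (X v 0%N == 0); case: ((X v 1%N == 0) && (X v 2%N == 0)).
rewrite /=.
by case: (X v 0%N == 0); case: (X v 1%N * X v 4%N + X v 2%N * X v 3%N == 0).
Qed.

Lemma quadP (l : F) (v : 'cV[F]_5) : l != 0 ->
  (X v 1 * X v 4 + X v 2 * X v 3 + l * X v 0 ^+ 2 == 0) = (lab v \in [:: L1; L3; inr l]).
Proof.
move=> l0; rewrite /lab /labf.
case: (boolP ((X v 3 == 0) && (X v 4 == 0))) => [/andP[/eqP E3 /eqP E4]|_].
  rewrite E3 E4 !mulr0 !add0r mulf_eq0 (negPf l0) /= sqrf_eq0.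
  by case: (X v 0 == 0); case: ((X v 1 == 0) && (X v 2 == 0)).
have [E1|h1] := eqVneq (X v 0) 0.
  by rewrite E1 expr0n mulr0 addr0 /=; case: (_ == 0).
have [EQ|hQ] := eqVneq (X v 1 * X v 4 + X v 2 * X v 3) 0.
  by rewrite EQ add0r mulf_eq0 (negPf l0) sqrf_eq0 (negPf h1).
rewrite /= !in_cons /= orbF; apply/eqP/eqP => [E|[E]]; last first.
  have -> : X v 1 * X v 4 + X v 2 * X v 3
      = - (- (X v 1 * X v 4 + X v 2 * X v 3) / X v 0 ^+ 2) * X v 0 ^+ 2.
    by field; rewrite h1.
  by rewrite E; ring.
congr inr.
have -> : X v 1 * X v 4 + X v 2 * X v 3 = - (l * X v 0 ^+ 2).
  by apply/eqP; rewrite -addr_eq0 E.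
by field; rewrite h1.
Qed.

Lemma scinv_labs (s : seq ('I_6 + F)) : scinv (fun x => lab x \in s).
Proof. by move=> k x k0 /=; rewrite lab_scale. Qed.

Lemma mem_psetL P (s : seq ('I_6 + F)) (v : 'cV[F]_5) :
  (forall x, P x = (lab x \in s)) -> v != 0 -> (pt v \in pset P) = (lab v \in s).
Proof.
move=> PQ v0; apply: (mem_pset' (Q := fun x => lab x \in s)) => //.
exact: scinv_labs.
Qed.

Lemma mem_cls L (v : 'cV[F]_5) : v != 0 -> (pt v \in cls L) = (lab v == L).
Proof. by move=> v0; rewrite mem_pset //; apply: scinv_lab. Qed.

Lemma Npt_PG : Npt F \in PG F.
Proof.
rewrite Npt_col pt_PG // nzP !Xc oner_eq0 //.
Qed.

Lemma clsA : [set Npt F] = cls L0.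
Proof.
apply: eq_onPG; [by rewrite sub1set Npt_PG|exact: pset_sub|] => v v0.
by rewrite ptN // mem_cls.
Qed.

Lemma clsB : ell F = cls L1.
Proof.
apply: eq_onPG; [exact: pset_sub|exact: pset_sub|] => v v0.
rewrite mem_cls // (@mem_psetL _ [:: L1]) ?mem_seq1 // => x.
by rewrite mem_seq1 ellP.
Qed.

Lemma m_ell (v : 'cV[F]_5) : v != 0 -> (pt v \in ell F) = (lab v \in [:: L1]).
Proof. by move=> v0; apply: mem_psetL => // x; rewrite mem_seq1 ellP. Qed.
Lemma m_pi (v : 'cV[F]_5) : v != 0 -> (pt v \in planePi F) = (lab v \in [:: L0; L1; L2]).
Proof. by move=> v0; apply: mem_psetL => // x; rewrite piP. Qed.
Lemma m_sig (v : 'cV[F]_5) : v != 0 -> (pt v \in Sigma F) = (lab v \in [:: L1; L3; L4]).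
Proof. by move=> v0; apply: mem_psetL => // x; rewrite sigP. Qed.
Lemma m_hq (v : 'cV[F]_5) : v != 0 -> (pt v \in Hq F) = (lab v \in [:: L1; L3]).
Proof. by move=> v0; apply: mem_psetL => // x; rewrite hqP. Qed.
Lemma m_cone (v : 'cV[F]_5) : v != 0 -> (pt v \in Cone F) = (lab v \in [:: L0; L1; L2; L3; L5]).
Proof. by move=> v0; apply: mem_psetL => // x; rewrite coneP. Qed.
Lemma m_quad l (v : 'cV[F]_5) : l != 0 -> v != 0 -> (pt v \in Quad l) = (lab v \in [:: L1; L3; inr l]).
Proof. by move=> l0 v0; apply: mem_psetL => // x; rewrite quadP. Qed.

Lemma subD_PG (S S' : {set {set 'cV[F]_5}}) P : S = pset P -> S :\: S' \subset PG F.
Proof. by move=> ->; apply: subset_trans (subsetDl _ _) (pset_sub _). Qed.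

Lemma clsC : planePi F :\: (ell F :|: [set Npt F]) = cls L2.
Proof.
apply: eq_onPG; [exact: subD_PG|exact: pset_sub|] => v v0.
rewrite mem_cls // in_setD in_setU ptN // m_pi // m_ell //.
by case: (lab v) => [[[|[|[|[|[|[|m]]]]]] Hm]|l].
Qed.

Lemma clsD : Hq F :\: ell F = cls L3.
Proof.
apply: eq_onPG; [exact: subD_PG|exact: pset_sub|] => v v0.
rewrite mem_cls // in_setD m_hq // m_ell //.
by case: (lab v) => [[[|[|[|[|[|[|m]]]]]] Hm]|l].
Qed.

Lemma clsE : Sigma F :\: Hq F = cls L4.
Proof.
apply: eq_onPG; [exact: subD_PG|exact: pset_sub|] => v v0.
rewrite mem_cls // in_setD m_sig // m_hq //.
by case: (lab v) => [[[|[|[|[|[|[|m]]]]]] Hm]|l].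
Qed.

Lemma clsK : Cone F :\: (planePi F :|: Hq F) = cls L5.
Proof.
apply: eq_onPG; [exact: subD_PG|exact: pset_sub|] => v v0.
rewrite mem_cls // in_setD in_setU m_cone // m_pi // m_hq //.
by case: (lab v) => [[[|[|[|[|[|[|m]]]]]] Hm]|l].
Qed.

Lemma clsQ l : l != 0 -> Quad l :\: Hq F = cls (inr l).
Proof.
move=> l0; apply: eq_onPG; [exact: subD_PG|exact: pset_sub|] => v v0.
rewrite mem_cls // in_setD m_quad // m_hq //.
case: (lab v) => [[[|[|[|[|[|[|m]]]]]] Hm]|l'] //.
by rewrite !in_cons /= orbF.
Qed.

End Cls.

Section Sums.
Variable F : finFieldType.
Local Notation q := #|F|.

Lemma sum1F : (\sum_(x : F) 1 = q)%N.
Proof. by rewrite sum1_card. Qed.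

Lemma sum_eq1 (c : F) : (\sum_(x : F) ((x == c) : nat) = 1)%N.
Proof.
rewrite (bigD1 c) //= eqxx big1 // => x /negPf ->; done.
Qed.

Lemma sum_neq (c : F) : (\sum_(x : F) ((x != c) : nat) = q - 1)%N.
Proof.
have : (\sum_(x : F) (((x != c) : nat) + ((x == c) : nat)) = q)%N.
  by rewrite -sum1F; apply: eq_bigr => x _; case: (x == c).
by rewrite big_split /= sum_eq1 => <-; rewrite addnK.
Qed.

Lemma sum_lin (a b m : F) : a != 0 -> (\sum_(x : F) ((a * x + b == m)%R : nat) = 1)%N.
Proof.
move=> a0; rewrite -(sum_eq1 ((m - b) / a)); apply: eq_bigr => x _.
congr nat_of_bool; apply/eqP/eqP => E.
  by rewrite -E; field.
by rewrite E; field.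
Qed.

Lemma sum_constF (n : nat) : (\sum_(x : F) n = q * n)%N.
Proof. by rewrite sum_nat_const cardE. Qed.

Lemma sumU_Q (x4 x5 m : F) : (x4 != 0) || (x5 != 0) ->
  (\sum_(x2 : F) \sum_(x3 : F) ((x2 * x5 + x3 * x4 == m)%R : nat) = q)%N.
Proof.
have [->|x50] := eqVneq x5 0 => [|_]; first rewrite orbF => x40.
  rewrite -[RHS]muln1 -sum_constF; apply: eq_bigr => x2 _.
  rewrite -(sum_lin 0 m x40); apply: eq_bigr => x3 _.
  by rewrite mulr0 add0r addr0 mulrC.
rewrite exchange_big /= -[RHS]muln1 -sum_constF; apply: eq_bigr => x3 _.
rewrite -(sum_lin (x3 * x4) m x50); apply: eq_bigr => x2 _.
by rewrite mulrC.
Qed.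

Lemma sum2_const (n : nat) : (\sum_(x2 : F) \sum_(x3 : F) n = q * q * n)%N.
Proof.
rewrite (eq_bigr (fun _ => q * n)%N); last by move=> x _; rewrite sum_constF.
by rewrite sum_constF mulnA.
Qed.

Lemma sum2_negb (p : F -> F -> bool) :
  (\sum_(x2 : F) \sum_(x3 : F) (~~ p x2 x3 : nat) =
   q * q - \sum_(x2 : F) \sum_(x3 : F) (p x2 x3 : nat))%N.
Proof.
have : (\sum_(x2 : F) \sum_(x3 : F) ((~~ p x2 x3 : nat) + (p x2 x3 : nat)) = q * q)%N.
  rewrite -[RHS]muln1 -sum2_const; apply: eq_bigr => x2 _; apply: eq_bigr => x3 _.
  by case: (p x2 x3).
rewrite (eq_bigr (fun x2 => \sum_(x3 : F) (~~ p x2 x3 : nat) + \sum_(x3 : F) (p x2 x3 : nat)))%N;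
  last by move=> x2 _; rewrite big_split.
by rewrite big_split /= => <-; rewrite addnK.
Qed.

Lemma sum2_00 : (\sum_(x2 : F) \sum_(x3 : F) (((x2 == 0) && (x3 == 0))%R : nat) = 1)%N.
Proof.
rewrite -(sum_eq1 0); apply: eq_bigr => x2 _.
rewrite (eq_bigr (fun x3 => (x2 == 0 :> F)%R * (x3 == 0 :> F)%R))%N;
  last by move=> x3 _; rewrite mulnb.
by rewrite -big_distrr /= sum_eq1 muln1.
Qed.

Lemma sumU_nz : (\sum_(x2 : F) \sum_(x3 : F) (~~ ((x2 == 0) && (x3 == 0))%R : nat) = q * q - 1)%N.
Proof. by rewrite sum2_negb sum2_00. Qed.

Lemma sumU_Qm (x4 x5 m : F) : m != 0 ->
  (\sum_(x2 : F) \sum_(x3 : F) ((x2 * x5 + x3 * x4 == m)%R : nat)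
   = (~~ ((x4 == 0) && (x5 == 0))%R : nat) * q)%N.
Proof.
move=> m0; case: (boolP ((x4 == 0) && (x5 == 0))) => [/andP[/eqP -> /eqP ->]|hw].
  rewrite mul0n big1 // => x2 _; rewrite big1 // => x3 _.
  by rewrite !mulr0 addr0 eq_sym (negPf m0).
by rewrite mul1n sumU_Q // -negb_and.
Qed.

Lemma sumU_Q0 (x4 x5 : F) : ~~ ((x4 == 0) && (x5 == 0)) ->
  (\sum_(x2 : F) \sum_(x3 : F) ((x2 * x5 + x3 * x4 == 0)%R : nat) = q)%N.
Proof. by move=> hw; rewrite sumU_Q // -negb_and. Qed.

Lemma sumU_Qn0 (x4 x5 : F) :
  (\sum_(x2 : F) \sum_(x3 : F) ((x2 * x5 + x3 * x4 != 0)%R : nat)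
   = (~~ ((x4 == 0) && (x5 == 0))%R : nat) * (q * q - q))%N.
Proof.
rewrite (sum2_negb (fun x2 x3 => x2 * x5 + x3 * x4 == 0)).
case: (boolP ((x4 == 0) && (x5 == 0))) => [/andP[/eqP E4 /eqP E5]|hw].
  rewrite mul0n -(muln1 (q * q)%N) -sum2_const.
  rewrite [X in (_ - X)%N](eq_bigr (fun _ => (\sum_(x3 : F) 1)%N)) ?subnn // => x2 _.
  by apply: eq_bigr => x3 _; rewrite E4 E5 !mulr0 addr0 eqxx.
by rewrite sumU_Q0 // mul1n.
Qed.

Lemma sumW0 (K : nat) :
  (\sum_(x4 : F) \sum_(x5 : F) ((((x4 == 0) && (x5 == 0))%R : nat) * K) = K)%N.
Proof.
rewrite -[RHS]mul1n -sum2_00 big_distrl /=; apply: eq_bigr => x4 _.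
by rewrite big_distrl.
Qed.

Lemma sumWnz (K : nat) :
  (\sum_(x4 : F) \sum_(x5 : F) ((~~ ((x4 == 0) && (x5 == 0))%R : nat) * K) = (q * q - 1) * K)%N.
Proof.
rewrite -sumU_nz big_distrl /=; apply: eq_bigr => x4 _.
by rewrite big_distrl.
Qed.

Lemma sumX0 (K : nat) : (\sum_(x1 : F) (((x1 == 0)%R : nat) * K) = K)%N.
Proof. by rewrite -big_distrl /= sum_eq1 mul1n. Qed.

Lemma sumXnz (K : nat) : (\sum_(x1 : F) (((x1 != 0)%R : nat) * K) = (q - 1) * K)%N.
Proof. by rewrite -big_distrl /= sum_neq. Qed.

End Sums.

Section Cnt.
Variable F : finFieldType.
Local Notation q := #|F|.

Lemma sum_pair (A B : finType) (G : A * B -> nat) :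
  (\sum_(t : A * B) G t = \sum_(a : A) \sum_(b : B) G (a, b))%N.
Proof. by rewrite pair_big /=; apply: eq_bigr => [[a b]] _. Qed.

Definition h5 (t : F * F * F * F * F) : 'cV[F]_5 :=
  col5 t.1.1.1.1 t.1.2 t.2 t.1.1.1.2 t.1.1.2.
Definition g5 (v : 'cV[F]_5) : F * F * F * F * F :=
  ((((X v 0, X v 3), X v 4), X v 1), X v 2).

Lemma h5_bij : bijective h5.
Proof.
exists g5.
  by case=> [[[[x1 x4] x5] x2] x3]; rewrite /g5 /h5 /= !Xc.
by move=> v; rewrite /g5 /h5 /= -col5E.
Qed.

Lemma card_sum5 (f : 'cV[F]_5 -> bool) :
  #|[set v | f v]| = (\sum_(x1 : F) \sum_(x4 : F) \sum_(x5 : F) \sum_(x2 : F) \sum_(x3 : F)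
                       (f (col5 x1 x2 x3 x4 x5) : nat))%N.
Proof.
rewrite -sum1_card big_mkcond /=.
rewrite (eq_bigr (fun v => (f v : nat))); last by move=> v _; rewrite inE; case: (f v).
rewrite (reindex h5) /=; last exact: onW_bij _ h5_bij.
by rewrite !sum_pair.
Qed.

Lemma card_pt (v : 'cV[F]_5) : v != 0 -> #|pt v| = (q - 1)%N.
Proof.
move=> v0; rewrite card_imset; last first.
  move=> k k' /eqP; rewrite -subr_eq0 -scalerBl scaler_eq0 (negPf v0) orbF subr_eq0.
  by move/eqP.
have -> : [set k : F | k != 0] = [set~ 0] by apply/setP => k; rewrite !inE.
by rewrite cardsC1 subn1.
Qed.

Lemma pt_of (A : {set 'cV[F]_5}) x : A \in PG F -> x \in A -> A = pt x.
Proof. by case/PGP => v v0 -> /mem_ptP[k k0 ->]; rewrite pt_scale. Qed.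

Lemma cnt_cls (L : 'I_6 + F) :
  (#|cls L| * (q - 1))%N = #|[set v : 'cV[F]_5 | (v != 0) && (lab v == L)]|.
Proof.
set D := [set v | _].
have sub := subsetP (pset_sub (fun x => lab x == L)).
have hp : partition (cls L) D.
  apply/and3P; split.
  - apply/eqP/setP => x; apply/bigcupP/idP.
      case=> p hp xp; have := sub _ hp; case/PGP => v v0 pE.
      move: hp xp; rewrite pE mem_cls // => /eqP Lv /mem_ptP[k k0 ->].
      by rewrite inE scaler_eq0 negb_or k0 v0 lab_scale // Lv eqxx.
    rewrite inE => /andP[x0 Lx]; exists (pt x); last exact: pt_self.
    by rewrite mem_cls.
  - apply/trivIsetP => A B hA hB AB; rewrite -setI_eq0; apply/eqP/setP => x.
    rewrite !inE; apply/negP => /andP[xA xB]; case/eqP: AB.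
    by rewrite (pt_of (sub _ hA) xA) (pt_of (sub _ hB) xB).
  - apply/negP => h0; have := sub _ h0; case/PGP => v v0 E.
    by have := pt_self v; rewrite -E inE.
rewrite (card_partition hp) (eq_bigr (fun _ => (q - 1)%N)) ?sum_nat_const //.
move=> A hA; have := sub _ hA; case/PGP => v v0 ->; exact: card_pt.
Qed.

End Cnt.

Section Cnt2.
Variable F : finFieldType.
Local Notation q := #|F|.

Definition indv (L : 'I_6 + F) (x1 x2 x3 x4 x5 : F) :=
  (col5 x1 x2 x3 x4 x5 != 0) && (lab (col5 x1 x2 x3 x4 x5) == L).

Lemma indvE L (x1 x2 x3 x4 x5 : F) : indv L x1 x2 x3 x4 x5 =
  [|| x1 != 0, x2 != 0, x3 != 0, x4 != 0 | x5 != 0] && (labf x1 x2 x3 x4 x5 == L).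
Proof. by rewrite /indv nzP /lab !Xc. Qed.

Lemma ind1 (x1 x2 x3 x4 x5 : F) : indv (L1 F) x1 x2 x3 x4 x5 =
  (x1 == 0) && (((x4 == 0) && (x5 == 0)) && ~~((x2 == 0) && (x3 == 0))).
Proof.
rewrite indvE /labf.
case: (boolP ((x4 == 0) && (x5 == 0))) => [/andP[/eqP E4 /eqP E5]|hw].
  rewrite E4 E5 eqxx !orbF /=.
  by case: (x1 == 0); case: (x2 == 0); case: (x3 == 0).
move: (hw); rewrite negb_and => hw'; rewrite hw' !orbT /=.
by case: (x1 == 0); case: (_ == 0).
Qed.

Lemma ind2 (x1 x2 x3 x4 x5 : F) : indv (L2 F) x1 x2 x3 x4 x5 =
  (x1 != 0) && (((x4 == 0) && (x5 == 0)) && ~~((x2 == 0) && (x3 == 0))).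
Proof.
rewrite indvE /labf.
case: (boolP ((x4 == 0) && (x5 == 0))) => [/andP[/eqP E4 /eqP E5]|hw].
  rewrite E4 E5 eqxx !orbF /=.
  by case: (x1 == 0); case: (x2 == 0); case: (x3 == 0).
move: (hw); rewrite negb_and => hw'; rewrite hw' !orbT /=.
by case: (x1 == 0); case: (_ == 0).
Qed.

Lemma ind3 (x1 x2 x3 x4 x5 : F) : indv (L3 F) x1 x2 x3 x4 x5 =
  (x1 == 0) && (~~((x4 == 0) && (x5 == 0)) && (x2 * x5 + x3 * x4 == 0)).
Proof.
rewrite indvE /labf.
case: (boolP ((x4 == 0) && (x5 == 0))) => [/andP[/eqP E4 /eqP E5]|hw].
  rewrite E4 E5 eqxx !orbF /= andbF.
  by case: (x1 == 0); case: (x2 == 0); case: (x3 == 0).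
move: (hw); rewrite negb_and => hw'; rewrite hw' !orbT /=.
by case: (x1 == 0); case: (_ == 0).
Qed.

Lemma ind4 (x1 x2 x3 x4 x5 : F) : indv (L4 F) x1 x2 x3 x4 x5 =
  (x1 == 0) && (x2 * x5 + x3 * x4 != 0).
Proof.
rewrite indvE /labf.
case: (boolP ((x4 == 0) && (x5 == 0))) => [/andP[/eqP E4 /eqP E5]|hw].
  rewrite E4 E5 eqxx !orbF !mulr0 addr0 eqxx /= andbF.
  by case: (x1 == 0); case: (x2 == 0); case: (x3 == 0).
move: (hw); rewrite negb_and => hw'; rewrite hw' !orbT /=.
by case: (x1 == 0); case: (_ == 0).
Qed.

Lemma ind5 (x1 x2 x3 x4 x5 : F) : indv (L5 F) x1 x2 x3 x4 x5 =
  (x1 != 0) && (~~((x4 == 0) && (x5 == 0)) && (x2 * x5 + x3 * x4 == 0)).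
Proof.
rewrite indvE /labf.
case: (boolP ((x4 == 0) && (x5 == 0))) => [/andP[/eqP E4 /eqP E5]|hw].
  rewrite E4 E5 eqxx !orbF /= andbF.
  by case: (x1 == 0); case: (x2 == 0); case: (x3 == 0).
move: (hw); rewrite negb_and => hw'; rewrite hw' !orbT /=.
by case: (x1 == 0); case: (_ == 0).
Qed.

Lemma indQ (l x1 x2 x3 x4 x5 : F) : l != 0 -> indv (inr l) x1 x2 x3 x4 x5 =
  (x1 != 0) && (x2 * x5 + x3 * x4 == - (l * x1 ^+ 2)).
Proof.
move=> l0.
have nz1 : x1 != 0 -> (0 == - (l * x1 ^+ 2)) = false.
  by move=> h1; rewrite eq_sym oppr_eq0 mulf_eq0 (negPf l0) sqrf_eq0 (negPf h1).
rewrite indvE /labf.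
case: (boolP ((x4 == 0) && (x5 == 0))) => [/andP[/eqP E4 /eqP E5]|hw].
  rewrite E4 E5 eqxx !mulr0 addr0 /=.
  have [E1|h1] := eqVneq x1 0; first by rewrite andbF.
  by rewrite nz1 // andbF; case: ifP.
move: (hw); rewrite negb_and => hw'; rewrite hw' !orbT /=.
have [E1|h1] := eqVneq x1 0; first by case: (_ == 0).
have [EQ|hQ] := eqVneq (x2 * x5 + x3 * x4) 0; first by rewrite EQ nz1.
rewrite /=; apply/eqP/eqP => [[E]|E]; last first.
  by congr inr; rewrite E; field.
have -> : x2 * x5 + x3 * x4 = - (- (x2 * x5 + x3 * x4) / x1 ^+ 2) * x1 ^+ 2.
  by field.
by rewrite E; ring.
Qed.

End Cnt2.

Section Cnt3.
Variable F : finFieldType.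
Local Notation q := #|F|.

Lemma cntE (L : 'I_6 + F) : #|[set v : 'cV[F]_5 | (v != 0) && (lab v == L)]| =
  (\sum_(x1 : F) \sum_(x4 : F) \sum_(x5 : F) \sum_(x2 : F) \sum_(x3 : F)
     (indv L x1 x2 x3 x4 x5 : nat))%N.
Proof. by rewrite card_sum5. Qed.

Lemma sum5_step (P : F -> F -> F -> F -> F -> nat) (G : F -> F -> F -> nat) :
  (forall x1 x4 x5, \sum_(x2 : F) \sum_(x3 : F) P x1 x4 x5 x2 x3 = G x1 x4 x5)%N ->
  (\sum_(x1 : F) \sum_(x4 : F) \sum_(x5 : F) \sum_(x2 : F) \sum_(x3 : F) P x1 x4 x5 x2 x3
   = \sum_(x1 : F) \sum_(x4 : F) \sum_(x5 : F) G x1 x4 x5)%N.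
Proof.
move=> H; apply: eq_bigr => x1 _; apply: eq_bigr => x4 _; apply: eq_bigr => x5 _.
exact: H.
Qed.

Lemma sumU_and (a : bool) (p : F -> F -> bool) :
  (\sum_(x2 : F) \sum_(x3 : F) ((a && p x2 x3) : nat) =
   a * \sum_(x2 : F) \sum_(x3 : F) (p x2 x3 : nat))%N.
Proof.
case: a; first by rewrite mul1n.
by rewrite mul0n big1 // => x2 _; rewrite big1.
Qed.

Lemma sumW_and (a : bool) (G : F -> F -> nat) :
  (\sum_(x4 : F) \sum_(x5 : F) (a * G x4 x5) = a * \sum_(x4 : F) \sum_(x5 : F) G x4 x5)%N.
Proof.
case: a; first by rewrite mul1n; apply: eq_bigr => x4 _; apply: eq_bigr => x5 _; rewrite mul1n.
by rewrite mul0n big1 // => x4 _; rewrite big1.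
Qed.

Lemma sumU_wQ0 (x4 x5 : F) :
  (\sum_(x2 : F) \sum_(x3 : F) ((~~((x4 == 0) && (x5 == 0)) && (x2 * x5 + x3 * x4 == 0))%R : nat)
   = (~~((x4 == 0) && (x5 == 0))%R : nat) * q)%N.
Proof. by rewrite sumU_and; case: (boolP (~~ _)) => // hw; rewrite sumU_Q0. Qed.

Lemma sumU_w0 (x4 x5 : F) :
  (\sum_(x2 : F) \sum_(x3 : F) ((((x4 == 0) && (x5 == 0)) && ~~((x2 == 0) && (x3 == 0)))%R : nat)
   = (((x4 == 0) && (x5 == 0))%R : nat) * (q * q - 1))%N.
Proof. by rewrite sumU_and sumU_nz. Qed.

Lemma count1 : #|[set v : 'cV[F]_5 | (v != 0) && (lab v == L1 F)]| = (q * q - 1)%N.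
Proof.
rewrite cntE (@sum5_step _ (fun x1 x4 x5 => ((x1 == 0)%R : nat) *
   ((((x4 == 0) && (x5 == 0))%R : nat) * (q * q - 1))))%N; last first.
  by move=> x1 x4 x5; under eq_bigr do under eq_bigr do rewrite ind1; rewrite sumU_and sumU_w0.
under eq_bigr do rewrite sumW_and sumW0.
by rewrite sumX0.
Qed.

Lemma count2 : #|[set v : 'cV[F]_5 | (v != 0) && (lab v == L2 F)]| = ((q - 1) * (q * q - 1))%N.
Proof.
rewrite cntE (@sum5_step _ (fun x1 x4 x5 => ((x1 != 0)%R : nat) *
   ((((x4 == 0) && (x5 == 0))%R : nat) * (q * q - 1))))%N; last first.
  by move=> x1 x4 x5; under eq_bigr do under eq_bigr do rewrite ind2; rewrite sumU_and sumU_w0.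
under eq_bigr do rewrite sumW_and sumW0.
by rewrite sumXnz.
Qed.

Lemma count3 : #|[set v : 'cV[F]_5 | (v != 0) && (lab v == L3 F)]| = ((q * q - 1) * q)%N.
Proof.
rewrite cntE (@sum5_step _ (fun x1 x4 x5 => ((x1 == 0)%R : nat) *
   ((~~((x4 == 0) && (x5 == 0))%R : nat) * q)))%N; last first.
  by move=> x1 x4 x5; under eq_bigr do under eq_bigr do rewrite ind3; rewrite sumU_and sumU_wQ0.
under eq_bigr do rewrite sumW_and sumWnz.
by rewrite sumX0.
Qed.

Lemma count4 : #|[set v : 'cV[F]_5 | (v != 0) && (lab v == L4 F)]| = ((q * q - 1) * (q * q - q))%N.
Proof.
rewrite cntE (@sum5_step _ (fun x1 x4 x5 => ((x1 == 0)%R : nat) *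
   ((~~((x4 == 0) && (x5 == 0))%R : nat) * (q * q - q))))%N; last first.
  by move=> x1 x4 x5; under eq_bigr do under eq_bigr do rewrite ind4; rewrite sumU_and sumU_Qn0.
under eq_bigr do rewrite sumW_and sumWnz.
by rewrite sumX0.
Qed.

Lemma count5 : #|[set v : 'cV[F]_5 | (v != 0) && (lab v == L5 F)]| = ((q - 1) * ((q * q - 1) * q))%N.
Proof.
rewrite cntE (@sum5_step _ (fun x1 x4 x5 => ((x1 != 0)%R : nat) *
   ((~~((x4 == 0) && (x5 == 0))%R : nat) * q)))%N; last first.
  by move=> x1 x4 x5; under eq_bigr do under eq_bigr do rewrite ind5; rewrite sumU_and sumU_wQ0.
under eq_bigr do rewrite sumW_and sumWnz.
by rewrite sumXnz.
Qed.

Lemma countQ (l : F) : l != 0 ->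
  #|[set v : 'cV[F]_5 | (v != 0) && (lab v == inr l)]| = ((q - 1) * ((q * q - 1) * q))%N.
Proof.
move=> l0.
rewrite cntE (@sum5_step _ (fun x1 x4 x5 => ((x1 != 0)%R : nat) *
   ((~~((x4 == 0) && (x5 == 0))%R : nat) * q)))%N; last first.
  move=> x1 x4 x5; under eq_bigr do under eq_bigr do rewrite indQ //.
  rewrite sumU_and; case: (boolP (x1 != 0)) => // h1.
  by rewrite sumU_Qm // oppr_eq0 mulf_neq0 // sqrf_eq0.
under eq_bigr do rewrite sumW_and sumWnz.
by rewrite sumXnz.
Qed.

End Cnt3.

Section Fin.
Variable F : finFieldType.
Variable alpha : F.
Hypothesis ch2 : (2%N \in [pchar F]).
Hypothesis hno : forall x : F, x ^+ 2 + x + alpha != 0.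

Definition Labs : {set 'I_6 + F} := [set~ inr 0].

Lemma lab_Labs (v : 'cV[F]_5) : v != 0 -> lab v \in Labs.
Proof.
rewrite nzP /lab => nz; case: (labfP nz) => [*|*|*|*|*|*|h1 hw hQ]; rewrite !inE //=.
by apply/negP => /eqP [] /eqP; rewrite mulf_eq0 oppr_eq0 (negPf hQ) invr_eq0 sqrf_eq0 (negPf h1).
Qed.

Definition wit (L : 'I_6 + F) : 'cV[F]_5 :=
  match L with
  | inl i => match val i with
             | 0 => col5 1 0 0 0 0
             | 1 => col5 0 1 0 0 0
             | 2 => col5 1 1 0 0 0
             | 3 => col5 0 0 0 1 0
             | 4 => col5 0 1 0 0 1
             | _ => col5 1 0 0 1 0
             end
  | inr l => col5 1 (- l) 0 0 1
  end.

Lemma lab_surj L : L \in Labs -> wit L != 0 /\ lab (wit L) = L.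
Proof.
rewrite inE; case: L => [[[|[|[|[|[|[|m]]]]]] Hm]|l] // hL;
  rewrite /wit /= nzP /lab !Xc /labf ?eqxx ?oner_eq0 /= ?mulr0 ?mulr1 ?mul0r ?mul1r ?addr0 ?add0r ?eqxx ?oner_eq0 /=;
  try (split => //; congr inl; exact: val_inj).
have l0 : l != 0 by apply: contra hL => /eqP ->; rewrite inE.
by split => //; rewrite oppr_eq0 (negPf l0) opprK expr1n divr1.
Qed.

Lemma orbits_eq : orbitsG alpha = [set cls L | L in Labs].
Proof.
apply/setP => S; apply/imsetP/imsetP.
  case=> p /PGP[v v0 ->] ->; exists (lab v); first exact: lab_Labs.
  exact: orbit_cls.
case=> L hL ->; have [w0 wL] := lab_surj hL.
exists (pt (wit L)); first exact: pt_PG.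
by rewrite (orbit_cls ch2 hno) // wL.
Qed.

Lemma cls_inj : {in Labs &, injective (@cls F)}.
Proof.
move=> L L' hL hL' E; have [w0 wL] := lab_surj hL.
have : pt (wit L) \in cls L by rewrite mem_cls // wL.
by rewrite E mem_cls // wL => /eqP.
Qed.

End Fin.

Unset Implicit Arguments.

Lemma noroot (F : fieldType) (alpha : F) (hirr : irreducible_poly ('X^2 + 'X + alpha%:P)) x :
  x ^+ 2 + x + alpha != 0.
Proof.
apply/negP => /eqP H.
have hr : root ('X^2 + 'X + alpha%:P) x by rewrite /root !hornerE H.
have hs : size ('X^2 + 'X + alpha%:P : {poly F}) = 3%N.
  rewrite -addrA size_addl ?size_polyXn //.
  rewrite (leq_ltn_trans (size_polyD _ _)) // size_polyX size_polyC.
  by case: (alpha != 0).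
have := hirr.2 ('X - x%:P); rewrite size_XsubC dvdp_XsubCl hr => /(_ isT isT) /eqp_size.
by rewrite size_XsubC hs.
Qed.

Theorem lemma3p1 (h : nat) (F : finFieldType) (hF : #|F| = (2 ^ h)%N)
  (alpha : F) (hirr : irreducible_poly ('X^2 + 'X + alpha%:P)) :
  let q := (2 ^ h)%N in
  let O := orbitsG alpha in
  let A := [set @Npt F] in
  let B := @ell F in
  let C := @planePi F :\: (@ell F :|: [set @Npt F]) in
  let D := @Hq F :\: @ell F in
  let E := @Sigma F :\: @Hq F in
  let K := @Cone F :\: (@planePi F :|: @Hq F) in
  [/\ #|O| = (q + 5)%N,
      O = [set A; B; C; D; E; K] :|: [set Quad l :\: @Hq F | l in [set l : F | l != 0]],
      [/\ #|A| = 1%N, #|B| = (q + 1)%N, #|C| = (q ^ 2 - 1)%N & #|D| = (q ^ 2 + q)%N],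
      #|E| = (q ^ 3 - q)%N /\ #|K| = (q ^ 3 - q)%N
    & forall l : F, l != 0 -> #|Quad l :\: @Hq F| = (q ^ 3 - q)%N].
Proof.
cbv zeta; rewrite -hF.
have ch2 : (2%N \in [pchar F]) := card_finPcharP hF (erefl : prime 2 = true).
have hno := @noroot F alpha hirr.
have q2 : (1 < #|F|)%N.
  by apply/card_gt1P; exists 0, 1; split => //; rewrite eq_sym oner_eq0.
have div : forall x N, (x * (#|F| - 1) = N * (#|F| - 1))%N -> x = N.
  by move=> x N /eqP; rewrite eqn_pmul2r ?subn_gt0 // => /eqP.
split.
- rewrite (orbits_eq ch2 hno) card_in_imset; last exact: cls_inj.
  rewrite /Labs cardsC1 card_sum card_ord; by rewrite addSn /= addnC.
- rewrite (orbits_eq ch2 hno) clsC clsK clsD clsE clsA clsB.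
  have -> : [set Quad l :\: Hq F | l in [set l : F | l != 0]] =
            [set cls (inr l) | l in [set l : F | l != 0]].
    by apply: eq_in_imset => l; rewrite inE => l0; exact: clsQ.
  apply/setP => S; apply/idP/idP.
    case/imsetP => L hL ->.
    case: L hL => [[[|[|[|[|[|[|m]]]]]] Hm]|l] hL //.
    * by rewrite (_ : inl _ = L0 F); [rewrite !inE eqxx| congr inl; exact: val_inj].
    * by rewrite (_ : inl _ = L1 F); [rewrite !inE eqxx ?orbT| congr inl; exact: val_inj].
    * by rewrite (_ : inl _ = L2 F); [rewrite !inE eqxx ?orbT| congr inl; exact: val_inj].
    * by rewrite (_ : inl _ = L3 F); [rewrite !inE eqxx ?orbT| congr inl; exact: val_inj].
    * by rewrite (_ : inl _ = L4 F); [rewrite !inE eqxx ?orbT| congr inl; exact: val_inj].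
    * by rewrite (_ : inl _ = L5 F); [rewrite !inE eqxx ?orbT| congr inl; exact: val_inj].
    * rewrite in_setU; apply/orP; right; apply: imset_f; rewrite inE.
      by move: hL; rewrite /Labs !inE; apply: contra => /eqP ->.
  rewrite in_setU => /orP[|/imsetP[l hl ->]]; last first.
    by apply: imset_f; rewrite !inE; move: hl; rewrite inE; apply: contra => /eqP [] ->.
    rewrite !inE -!orbA => /orP[/eqP->|/orP[/eqP->|/orP[/eqP->|/orP[/eqP->|/orP[/eqP->|/eqP->]]]]];
      by apply: imset_f; rewrite /Labs !inE.
- split.
  + by rewrite cards1.
  + by rewrite clsB; apply: div; rewrite cnt_cls count1; nia.
  + by rewrite clsC; apply: div; rewrite cnt_cls count2 !expnS expn0 !muln1; nia.
  + by rewrite clsD; apply: div; rewrite cnt_cls count3 !expnS expn0 !muln1; nia.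
- split.
  + by rewrite clsE; apply: div; rewrite cnt_cls count4 !expnS expn0 !muln1; nia.
  + by rewrite clsK; apply: div; rewrite cnt_cls count5 !expnS expn0 !muln1; nia.
- move=> l l0.
  by rewrite clsQ //; apply: div; rewrite cnt_cls countQ // !expnS expn0 !muln1; nia.
Qed.
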